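(* Let $q_1,q_2:\mathbb{R}\to[0,\infty)$ be even probability densities, $r_1,r_2:\mathbb{R}\to\mathbb{R}$ measurable, $A=\sum_i a_i|i\rangle\langle i|$ Hermitian on a finite-dimensional Hilbert space $\mathcal{H}$, $t_1,t_2\ge0$, and suppose $\int|r_m(p)|q_m(a_it_m-p)\,dp<\infty$ for $m=1,2$ and all eigenvalues $a_i$; put $s_m\coloneqq q_m*r_m$. Let $\rho$ be a density operator on $\mathcal{H}$, $|q_m\rangle\coloneqq\int dp\sqrt{q_m(p)}|p\rangle$, and $W\coloneqq e^{i\hat{x}_2\otimes At_2}e^{i\hat{x}_1\otimes At_1}$ acting on (mode 1)$\otimes$(mode 2)$\otimes\mathcal{H}$. Define the joint outcome density $$P(p_1,p_2)\coloneqq\operatorname{Tr}\!\left[(|p_1\rangle\langle p_1|\otimes|p_2\rangle\langle p_2|\otimes I)W(|q_1\rangle\langle q_1|\otimes|q_2\rangle\langle q_2|\otimes\rho)W^\dagger\right].$$ Then $$\int\!\!\int r_1(p_1)r_2(p_2)P(p_1,p_2)\,dp_1\,dp_2=\operatorname{Tr}\!\left[s_1(At_1)\,s_2(At_2)\,\rho\right].$$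
   Context: Each control qumode has Hilbert space $L^2(\mathbb{R})$ with generalized position/momentum eigenbases $\{|x\rangle\},\{|p\rangle\}$, $\langle x|p\rangle=e^{ipx}/\sqrt{2\pi}$; $\hat{x}_m$ is the position quadrature of mode $m$, and for Hermitian $B=\sum_ib_i|i\rangle\langle i|$, $e^{i\hat{x}_m\otimes B}=\sum_i\int dx\,e^{ixb_i}|x\rangle\langle x|_m\otimes|i\rangle\langle i|$. Convolution: $(f*g)(a)=\int f(a-p)g(p)\,dp$; $s_m(At_m)$ by functional calculus. *)

(* Defs.v *)
From HB Require Import structures.
From mathcomp Require Import all_boot all_order all_algebra.
From mathcomp Require Import all_classical all_reals all_analysis.
From mathcomp Require Import complex.
Set Implicit Arguments. Unset Strict Implicit. Unset Printing Implicit Defensive.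
Import Order.TTheory GRing.Theory Num.Theory.
Local Open Scope ring_scope.

Section Defs.
Variable R : realType.
Local Notation C := (R[i]).

Definition adj_mx (m n : nat) (M : 'M[C]_(m, n)) : 'M[C]_(n, m) :=
  (map_mx conjc M)^T.

(** The finite-dimensional Hilbert space H = C^n; an orthonormal basis
    {|i>} is given by the columns of a unitary matrix U. *)
Definition unitary_mx (n : nat) (U : 'M[C]_n) : Prop := adj_mx U *m U = 1%:M.

Definition proj (n : nat) (U : 'M[C]_n) (i : 'I_n) : 'M[C]_n :=
  col i U *m adj_mx (col i U).

Definition funcalc (n : nat) (U : 'M[C]_n) (b : 'I_n -> R) (f : R -> R)
  : 'M[C]_n := \sum_i ((f (b i))%:C)%C *: proj U i.

Definition herm_of (n : nat) (U : 'M[C]_n) (a : 'I_n -> R) : 'M[C]_n :=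
  funcalc U a id.

Definition density_op (n : nat) (rho : 'M[C]_n) : Prop :=
  adj_mx rho = rho /\
  (forall v : 'cV[C]_n, 0 <= (adj_mx v *m rho *m v) 0 0) /\
  \tr rho = 1.

Definition even_prob_density (q : R -> R) : Prop :=
  measurable_fun setT q /\ (forall x, 0 <= q x) /\
  (\int[lebesgue_measure]_x (q x)%:E = 1)%E /\ (forall x, q (- x) = q x).

Definition convolution (f g : R -> R) (x : R) : R :=
  Rintegral lebesgue_measure setT (fun p => f (x - p) * g p).

(** Operators on (mode 1) (x) (mode 2) (x) H are represented by their
    kernels in the (generalized) momentum bases:
    K p1 p2 p1' p2' = <p1, p2| X |p1', p2'>  in End(H) = 'M_n. *)
Definition kernel (n : nat) := R -> R -> R -> R -> 'M[C]_n.

(** Momentum wave function of |q> = int dp sqrt(q p) |p>. *)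
Definition ket_q (q : R -> R) (p : R) : R := Num.sqrt (q p).

Definition init_state (n : nat) (q1 q2 : R -> R) (rho : 'M[C]_n) : kernel n :=
  fun p1 p2 p1' p2' =>
    ((ket_q q1 p1 * ket_q q1 p1' * ket_q q2 p2 * ket_q q2 p2')%:C)%C *: rho.

(** With <x|p> = e^{ipx}/sqrt(2 pi), e^{i x b}|p> = |p + b>; hence the
    controlled operator E_m = e^{i x_m (x) B}, B = sum_i b_i |i><i|, acts
    on momentum kernels by shifting the m-th momentum by b_i on the
    i-th eigenspace.  E_m X and X E_m^dagger: *)
Definition lmul1 (n : nat) (U : 'M[C]_n) (b : 'I_n -> R) (K : kernel n)
  : kernel n := fun p1 p2 p1' p2' =>
  \sum_i proj U i *m K (p1 - b i) p2 p1' p2'.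
Definition lmul2 (n : nat) (U : 'M[C]_n) (b : 'I_n -> R) (K : kernel n)
  : kernel n := fun p1 p2 p1' p2' =>
  \sum_i proj U i *m K p1 (p2 - b i) p1' p2'.
Definition rmul1_adj (n : nat) (U : 'M[C]_n) (b : 'I_n -> R) (K : kernel n)
  : kernel n := fun p1 p2 p1' p2' =>
  \sum_j K p1 p2 (p1' - b j) p2' *m proj U j.
Definition rmul2_adj (n : nat) (U : 'M[C]_n) (b : 'I_n -> R) (K : kernel n)
  : kernel n := fun p1 p2 p1' p2' =>
  \sum_j K p1 p2 p1' (p2' - b j) *m proj U j.

Definition W_conj (n : nat) (U : 'M[C]_n) (a : 'I_n -> R) (t1 t2 : R)
  (K : kernel n) : kernel n :=
  let b1 := fun i => a i * t1 in
  let b2 := fun i => a i * t2 in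
  lmul2 U b2 (lmul1 U b1 (rmul2_adj U b2 (rmul1_adj U b1 K))).

(** Joint outcome density
    P(p1,p2) = Tr[(|p1><p1| (x) |p2><p2| (x) I) W (...) W^dagger]
             = tr_H <p1,p2| W (...) W^dagger |p1,p2>. *)
Definition joint_density (n : nat) (U : 'M[C]_n) (a : 'I_n -> R)
  (t1 t2 : R) (q1 q2 : R -> R) (rho : 'M[C]_n) (p1 p2 : R) : C :=
  \tr (W_conj U a t1 t2 (init_state q1 q2 rho) p1 p2 p1 p2).

End Defs.

(* Main.v *)
Require Import Defs.
From HB Require Import structures.
From mathcomp Require Import all_boot all_order all_algebra.
From mathcomp Require Import all_classical all_reals all_analysis.
From mathcomp Require Import complex.
From mathcomp Require Import ring measurable_realfun.
Import Order.TTheory GRing.Theory Num.Theory.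
Local Open Scope ring_scope.

Section Alg.
Variable R : realType.
Local Notation C := (R[i]).
Variables (n : nat) (U : 'M[C]_n).
Hypothesis HU : unitary_mx U.

Lemma sum_delta (T : zmodType) (i : 'I_n) (F : 'I_n -> T) :
  \sum_l (if l == i then F l else 0) = F i.
Proof.
rewrite (bigD1 i) //= eqxx big1 ?addr0 // => l /negbTE -> //.
Qed.

Lemma proj_mul (i j : 'I_n) :
  Defs.proj U i *m Defs.proj U j = if i == j then Defs.proj U i else 0.
Proof.
rewrite /Defs.proj mulmxA -(mulmxA (col i U)).
have -> : adj_mx (col i U) *m col j U = ((i == j)%:R)%:M.
  have -> : adj_mx (col i U) = row i (adj_mx U).
    by apply/matrixP => x y; rewrite !mxE.
  have H := congr1 (fun M : 'M[C]_n => M i j) (HU : adj_mx U *m U = 1%:M); move: H => /=.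
  rewrite !mxE => H.
  apply/matrixP => x y; rewrite !ord1 !mxE -H eqxx /= mulr1n.
  by apply: eq_bigr => k _; rewrite !mxE.
rewrite mul_mx_scalar.
case: eqP => [->|_]; first by rewrite scale1r.
by rewrite scale0r mul0mx.
Qed.

Local Notation P := (Defs.proj U).

Lemma R1 (G : 'I_n -> 'I_n -> 'M[C]_n) :
  \sum_k (\sum_j G k j *m P j) *m P k = \sum_k G k k *m P k.
Proof.
apply: eq_bigr => k _; rewrite mulmx_suml.
rewrite -[RHS](@sum_delta _ k (fun j => G k j *m P j)).
apply: eq_bigr => j _; rewrite -mulmxA proj_mul.
by case: eqP => _; rewrite ?mulmx0.
Qed.

Lemma L1 (Z : 'I_n -> 'I_n -> 'M[C]_n) :
  \sum_l P l *m (\sum_i P i *m Z l i) = \sum_l P l *m Z l l.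
Proof.
apply: eq_bigr => l _; rewrite mulmx_sumr.
rewrite -[RHS](@sum_delta _ l (fun i => P i *m Z l i)).
apply: eq_bigr => i _; rewrite mulmxA proj_mul eq_sym.
by case: eqP => [->|_]; rewrite ?mul0mx.
Qed.

Lemma tr_collapse (F : 'I_n -> 'I_n -> 'I_n -> 'I_n -> C) rho :
 \tr (\sum_l P l *m \sum_i P i *m \sum_k (\sum_j (F l i k j *: rho *m P j)) *m P k)
 = \sum_i F i i i i * \tr (P i *m rho).
Proof.
rewrite (L1 (fun l i => \sum_k (\sum_j (F l i k j *: rho *m P j)) *m P k)).
rewrite raddf_sum /=.
apply: eq_bigr => l _.
rewrite (R1 (fun k j => F l l k j *: rho)) mulmx_sumr raddf_sum /=.
rewrite -[RHS](@sum_delta _ l (fun k => F k k k k * \tr (P k *m rho))).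
apply: eq_bigr => k _.
rewrite -scalemxAl -scalemxAr mxtraceZ mulmxA mxtrace_mulC mulmxA proj_mul.
by case: eqP => [->|_]; rewrite ?mul0mx ?mxtrace0 ?mulr0.
Qed.

Lemma rhs_eq (b1 b2 : 'I_n -> R) f1 f2 rho :
  \tr (funcalc U b1 f1 *m funcalc U b2 f2 *m rho) =
  \sum_i ((f1 (b1 i) * f2 (b2 i))%:C)%C * \tr (P i *m rho).
Proof.
rewrite /funcalc mulmx_suml mulmx_suml raddf_sum /=.
apply: eq_bigr => i _.
rewrite mulmx_sumr mulmx_suml raddf_sum /=.
rewrite -[RHS](@sum_delta _ i (fun j => ((f1 (b1 i) * f2 (b2 j))%:C)%C * \tr (P i *m rho))).
apply: eq_bigr => j _.
rewrite -scalemxAr -!scalemxAl proj_mul eq_sym.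
case: eqP => [->|_]; last by rewrite mul0mx !scaler0 mxtrace0.
by rewrite !mxtraceZ rmorphM -mulrA mulrCA.
Qed.
End Alg.
Section Alg2.
Variable R : realType.
Local Notation C := (R[i]).
Variables (n : nat) (U : 'M[C]_n).
Hypothesis HU : unitary_mx U.
Lemma jd_eq (a : 'I_n -> R) t1 t2 q1 q2 rho p1 p2 :
 (forall x, 0 <= q1 x) -> (forall x, 0 <= q2 x) ->
 joint_density U a t1 t2 q1 q2 rho p1 p2 =
 \sum_i ((q1 (p1 - a i * t1) * q2 (p2 - a i * t2))%:C)%C * \tr (Defs.proj U i *m rho).
Proof.
move=> h1 h2.
rewrite /joint_density /W_conj /lmul2 /lmul1 /rmul2_adj /rmul1_adj /init_state.
rewrite (@tr_collapse R n U HU (fun l i k j => (ket_q q1 (p1 - a i * t1) *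
  ket_q q1 (p1 - a j * t1) * ket_q q2 (p2 - a l * t2) * ket_q q2 (p2 - a k * t2))%:C%C)).
apply: eq_bigr => i _; congr (_ * _); congr (_%:C)%C.
by rewrite /ket_q -expr2 -mulrA -expr2 !sqr_sqrtr.
Qed.
End Alg2.

Section Ana.
Variable R : realType.
Local Notation mu := (@lebesgue_measure R).

Lemma Rint_sum_seq (I : eqType) (s : seq I) (k : I -> R) (f : I -> R -> R) :
  (forall i, mu.-integrable setT (EFin \o f i)) ->
  mu.-integrable setT (EFin \o (fun x => \sum_(i <- s) k i * f i x)) /\
  Rintegral mu setT (fun x => \sum_(i <- s) k i * f i x)
  = \sum_(i <- s) k i * Rintegral mu setT (f i).
Proof.
move=> hf; elim: s => [|j s [ih1 ih2]].
  split.
    apply: (eq_integrable measurableT (cst 0%E)); last exact: integrable0.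
    by move=> x _ /=; rewrite big_nil.
  rewrite big_nil.
  under eq_Rintegral do rewrite big_nil.
  by rewrite Rintegral_cst // mul0r.
have hj : mu.-integrable setT (EFin \o (fun x => k j * f j x)).
  apply: (eq_integrable measurableT _ _ _ (integrableZl measurableT (k j) (hf j))).
  by move=> x _ /=; rewrite EFinM.
split.
  apply: (eq_integrable measurableT _ _ _ (integrableD measurableT hj ih1)).
  by move=> x _ /=; rewrite big_cons EFinD.
under eq_Rintegral do rewrite big_cons.
rewrite RintegralD // ih2 big_cons RintegralZl //.
Qed.

Lemma Rint_sum (I : finType) (k : I -> R) (f : I -> R -> R) :
  (forall i, mu.-integrable setT (EFin \o f i)) ->
  Rintegral mu setT (fun x => \sum_i k i * f i x)
  = \sum_i k i * Rintegral mu setT (f i).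
Proof. by move=> hf; case: (@Rint_sum_seq I (index_enum I) k f hf). Qed.

Lemma double (n : nat) (b1 b2 : 'I_n -> R) (q1 q2 r1 r2 : R -> R) (d : 'I_n -> R) :
 (forall i, mu.-integrable setT (EFin \o (fun p => r1 p * q1 (p - b1 i)))) ->
 (forall i, mu.-integrable setT (EFin \o (fun p => r2 p * q2 (p - b2 i)))) ->
 Rintegral mu setT (fun p2 => Rintegral mu setT (fun p1 =>
    r1 p1 * r2 p2 * \sum_i (q1 (p1 - b1 i) * q2 (p2 - b2 i) * d i)))
 = \sum_i Rintegral mu setT (fun p => r1 p * q1 (p - b1 i)) *
           Rintegral mu setT (fun p => r2 p * q2 (p - b2 i)) * d i.
Proof.
move=> h1 h2.
have E : forall p2, (fun p1 => r1 p1 * r2 p2 * \sum_i (q1 (p1 - b1 i) * q2 (p2 - b2 i) * d i))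
  = (fun p1 => \sum_i (r2 p2 * q2 (p2 - b2 i) * d i) * (r1 p1 * q1 (p1 - b1 i))).
  move=> p2; apply: funext => p1; rewrite mulr_sumr; apply: eq_bigr => i _; ring.
under eq_Rintegral do rewrite E Rint_sum //.
set S1 := fun i => Rintegral mu setT (fun p => r1 p * q1 (p - b1 i)).
have E2 : (fun p2 => \sum_i r2 p2 * q2 (p2 - b2 i) * d i * S1 i)
  = (fun p2 => \sum_i (S1 i * d i) * (r2 p2 * q2 (p2 - b2 i))).
  apply: funext => p2; apply: eq_bigr => i _; ring.
rewrite E2 Rint_sum //; apply: eq_bigr => i _; rewrite /S1; ring.
Qed.

Lemma int_shift (q r : R -> R) (b : R) : even_prob_density q ->
  measurable_fun setT r ->
  (\int[mu]_p (`|r p| * q (b - p))%:E < +oo)%E ->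
  mu.-integrable setT (EFin \o (fun p => r p * q (p - b))).
Proof.
move=> [mq [q0 [_ qe]]] mr hi; apply/integrableP; split.
  apply/measurable_EFinP; apply: measurable_funM => //.
  apply: measurableT_comp => //.
  exact: measurable_funB.
apply: le_lt_trans hi; rewrite le_eqVlt; apply/orP; left; apply/eqP.
apply: eq_integral => p _ /=.
have -> : p - b = - (b - p) by rewrite opprB.
by rewrite qe normrM (ger0_norm (q0 _)).
Qed.

Lemma conv_eq (q r : R -> R) (b : R) : even_prob_density q ->
  convolution q r b = Rintegral mu setT (fun p => r p * q (p - b)).
Proof.
move=> [mq [q0 [_ qe]]]; apply: eq_Rintegral => p _.
have -> : p - b = - (b - p) by rewrite opprB.
by rewrite qe mulrC.
Qed.
End Ana.

Section CC.
Variable R : realType.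
Lemma ReIm_sum (I : finType) (x : I -> R) (c : I -> R[i]) :
  complex.Re (\sum_i ((x i)%:C)%C * c i) = \sum_i x i * complex.Re (c i) /\
  complex.Im (\sum_i ((x i)%:C)%C * c i) = \sum_i x i * complex.Im (c i).
Proof.
split.
  symmetry; apply: (big_rec2 (fun a b => a = complex.Re b)) => [//|i y1 y2 _ ->].
  case: (c i) => cr ci; case: y2 => yr yi /=; ring.
symmetry; apply: (big_rec2 (fun a b => a = complex.Im b)) => [//|i y1 y2 _ ->].
case: (c i) => cr ci; case: y2 => yr yi /=; ring.
Qed.
End CC.

Theorem theorem9 (R : realType) (n : nat)
  (q1 q2 r1 r2 : R -> R) (U : 'M[R[i]]_n) (a : 'I_n -> R) (t1 t2 : R)
  (rho : 'M[R[i]]_n) :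
  even_prob_density q1 -> even_prob_density q2 ->
  measurable_fun setT r1 -> measurable_fun setT r2 ->
  unitary_mx U -> 0 <= t1 -> 0 <= t2 ->
  (forall i : 'I_n,
     (\int[lebesgue_measure]_p (`|r1 p| * q1 (a i * t1 - p))%:E < +oo)%E) ->
  (forall i : 'I_n,
     (\int[lebesgue_measure]_p (`|r2 p| * q2 (a i * t2 - p))%:E < +oo)%E) ->
  density_op rho ->
  let P := joint_density U a t1 t2 q1 q2 rho in
  let s1 := convolution q1 r1 in
  let s2 := convolution q2 r2 in
  let rhs := \tr (funcalc U (fun i => a i * t1) s1
                  *m funcalc U (fun i => a i * t2) s2 *m rho) in
  Rintegral lebesgue_measure setT (fun p2 =>
    Rintegral lebesgue_measure setT (fun p1 =>
      r1 p1 * r2 p2 * complex.Re (P p1 p2))) = complex.Re rhs /\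
  Rintegral lebesgue_measure setT (fun p2 =>
    Rintegral lebesgue_measure setT (fun p1 =>
      r1 p1 * r2 p2 * complex.Im (P p1 p2))) = complex.Im rhs.
Proof.
Proof.
move=> hq1 hq2 mr1 mr2 HU _ _ h1 h2 _ P s1 s2 rhs.
have q10 : forall x, 0 <= q1 x by case: hq1 => _ [].
have q20 : forall x, 0 <= q2 x by case: hq2 => _ [].
set c := fun i => \tr (Defs.proj U i *m rho).
have eP : forall p1 p2, P p1 p2 = \sum_i ((q1 (p1 - a i * t1) * q2 (p2 - a i * t2))%:C)%C * c i.
  by move=> p1 p2; rewrite /P jd_eq.
have eR : rhs = \sum_i ((s1 (a i * t1) * s2 (a i * t2))%:C)%C * c i.
  by rewrite /rhs rhs_eq.
have i1 : forall i, lebesgue_measure.-integrable setT (EFin \o (fun p => r1 p * q1 (p - a i * t1))).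
  by move=> i; apply: int_shift.
have i2 : forall i, lebesgue_measure.-integrable setT (EFin \o (fun p => r2 p * q2 (p - a i * t2))).
  by move=> i; apply: int_shift.
split.
  under eq_Rintegral do under eq_Rintegral do rewrite eP (ReIm_sum _ _ _ _).1.
  rewrite (@double R n (fun i => a i * t1) (fun i => a i * t2) q1 q2 r1 r2 (fun i => complex.Re (c i))) //.
  rewrite eR (ReIm_sum _ _ _ _).1; apply: eq_bigr => i _.
  by rewrite /s1 /s2 !conv_eq.
under eq_Rintegral do under eq_Rintegral do rewrite eP (ReIm_sum _ _ _ _).2.
rewrite (@double R n (fun i => a i * t1) (fun i => a i * t2) q1 q2 r1 r2 (fun i => complex.Im (c i))) //.
rewrite eR (ReIm_sum _ _ _ _).2; apply: eq_bigr => i _.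
by rewrite /s1 /s2 !conv_eq.
Qed.
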